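(* Let $\mathcal{W}^F$ be a trained Wilson network with $m$ rows and $n$ columns, where $F$ consists of either one pattern or two distinct patterns. Then every balanced coloring of $\mathcal{W}^F$ is an orbit coloring, i.e. its color classes are exactly the orbits of some subgroup of the automorphism group $\mathrm{aut}(\mathcal{W}^F)$.
   Context: Let $M=\{1,\dots,m\}$, $N=\{1,\dots,n\}$; nodes are the pairs $(i,j)\in M\times N$, all of the same type. The untrained Wilson network $\mathcal{W}$ has, for every ordered pair of distinct nodes in the same column, exactly one arrow of a single ''inhibitory'' type, and no other arrows. A pattern is determined by a function $g:N\to M$; its node set is $\mathcal{C}^g=\{(g(j),j):j\in N\}$ (one node from each column). Two patterns are distinct if their functions differ. For a set $F$ of patterns, the trained Wilson network $\mathcal{W}^F$ is obtained from $\mathcal{W}$ by adding, for each pattern $g\in F$, one arrow of a second ''excitatory'' type from each node of $\mathcal{C}^g$ to each other node of $\mathcal{C}^g$; the excitatory arrows are of the same type for all patterns, and arrows from different patterns are counted separately (so two nodes lying in two common patterns are joined by two excitatory arrows in each direction). The automorphism group $\mathrm{aut}(\mathcal{W}^F)$ consists of the node permutations preserving, for every ordered pair of nodes, the number of arrows of each type between them. A coloring is a partition of the nodes into color classes; it is balanced if whenever nodes $c,d$ have the same color, for each arrow type and each color $k$ the number of input arrows of that type to $c$ (counted with multiplicity) whose tail has color $k$ equals the corresponding number for $d$. *)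

(* Defs.v *)
From mathcomp Require Import all_boot all_fingroup.
Set Implicit Arguments. Unset Strict Implicit. Unset Printing Implicit Defensive.

Definition node (m n : nat) : finType := ('I_m * 'I_n)%type.

(* A pattern is a function g : N -> M; its node set is {(g j, j)}. *)
Definition pattern (m n : nat) := {ffun 'I_n -> 'I_m}.

Definition in_pattern m n (g : pattern m n) (c : node m n) : bool := g c.2 == c.1.

Definition inh m n (c d : node m n) : nat := ((c.2 == d.2) && (c != d) : bool).

Definition exc m n (F : seq (pattern m n)) (c d : node m n) : nat :=
  count (fun g => [&& c != d, in_pattern g c & in_pattern g d]) F.

Definition autW m n (F : seq (pattern m n)) : {set {perm node m n}} :=
  [set p : {perm node m n} | [forall c, forall d,
     (inh (p c) (p d) == inh c d) && (exc F (p c) (p d) == exc F c d)]].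

Definition balanced m n (F : seq (pattern m n)) (C : eqType) (col : node m n -> C) : Prop :=
  forall c d : node m n, col c = col d ->
    forall k : C,
      \sum_(e : node m n | col e == k) inh e c = \sum_(e : node m n | col e == k) inh e d
   /\ \sum_(e : node m n | col e == k) exc F e c = \sum_(e : node m n | col e == k) exc F e d.

Definition orbit_coloring m n (F : seq (pattern m n)) (C : eqType) (col : node m n -> C) : Prop :=
  exists H : {group {perm node m n}}, H \subset autW F /\
    forall c d : node m n, col c = col d <-> exists2 h, h \in H & h c = d.

(* Main.v *)
Require Import Defs.
From mathcomp Require Import all_boot all_fingroup.
From mathcomp Require Import zify.
Set Implicit Arguments. Unset Strict Implicit. Unset Printing Implicit Defensive.
Lemma count_sum (T : Type) (P : pred T) (s : seq T) :
  count P s = \sum_(x <- s) (P x : nat).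
Proof. by elim: s => [|x s IH]; rewrite ?big_nil ?big_cons //= IH. Qed.

Lemma match_ord (N : nat) (T : eqType) (a b : 'I_N -> T) :
  (forall v, \sum_(i < N) (a i == v : nat) = \sum_(i < N) (b i == v : nat)) ->
  exists be : {perm 'I_N}, forall i, b (be i) = a i.
Proof.
move=> H.
have Hc : forall (f : 'I_N -> T) v, count_mem v (val (mktuple f)) = \sum_(i < N) (f i == v : nat).
  move=> f v; rewrite /= count_sum big_map big_enum /=.
  by apply: eq_bigr => i _; rewrite eq_sym.
have Hp : perm_eq (val (mktuple a)) (mktuple b).
  apply/allP => x _ /=; by rewrite Hc Hc H.
case/tuple_permP: Hp => p Hp.
exists p => i.
have /val_inj Hp' := Hp.
have := congr1 (fun t => tnth t i) Hp'.
by rewrite /= !tnth_mktuple.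
Qed.

Lemma match_ord_pin (N : nat) (T : eqType) (a b : 'I_N -> T) i0 i1 :
  (forall v, \sum_(i < N) (a i == v : nat) = \sum_(i < N) (b i == v : nat)) ->
  a i0 = b i1 ->
  exists be : {perm 'I_N}, (forall i, b (be i) = a i) /\ be i0 = i1.
Proof.
move=> H E; case: (match_ord H) => p Hp.
exists (p * tperm (p i0) i1)%g; split; last by rewrite permM tpermL.
move=> i; rewrite permM.
case: tpermP => [e|e|_ _]; rewrite ?Hp //.
- by rewrite -E (perm_inj e).
- by rewrite E -e Hp.
Qed.

Section Grp.
Variables (m n : nat) (C : eqType) (col : node m n -> C).

Definition Hs (F : seq (pattern m n)) : {set {perm node m n}} :=
  [set p | (p \in autW F) && [forall x, col (p x) == col x]].

Lemma autWP F (p : {perm node m n}) :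
  reflect (forall c d, inh (p c) (p d) = inh c d /\ exc F (p c) (p d) = exc F c d)
          (p \in autW F).
Proof.
rewrite inE; apply: (iffP forallP) => [H c d|H c].
  by have /forallP/(_ d)/andP[/eqP -> /eqP ->] := H c.
by apply/forallP => d; case: (H c d) => -> ->; rewrite !eqxx.
Qed.

Lemma HsP F (p : {perm node m n}) :
  reflect ((forall c d, inh (p c) (p d) = inh c d /\ exc F (p c) (p d) = exc F c d)
           /\ forall x, col (p x) = col x) (p \in Hs F).
Proof.
rewrite inE; apply: (iffP andP) => [[/autWP H /forallP H2]|[H H2]].
  by split=> // x; apply/eqP.
by split; [apply/autWP|apply/forallP => x; apply/eqP].
Qed.

Lemma group_set_Hs F : group_set (Hs F).
Proof.
apply/group_setP; split.
  by apply/HsP; split=> [c d|x]; rewrite !perm1.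
move=> x y /HsP[Hx Cx] /HsP[Hy Cy]; apply/HsP; split=> [c d|z]; rewrite !permM.
  by case: (Hy (x c) (x d)) => -> ->; apply: Hx.
by rewrite Cy Cx.
Qed.

Canonical Hg F := Group (group_set_Hs F).

Lemma orbit_of_H F :
  (forall c d, col c = col d -> exists2 h, h \in Hs F & h c = d) -> orbit_coloring F col.
Proof.
move=> H; exists (Hg F); split.
  by apply/subsetP => p /HsP[H1 _]; apply/autWP.
move=> c d; split; first exact: H.
by case=> h /HsP[_ Ch] <-; rewrite Ch.
Qed.

Lemma H_trans F c d e : (exists2 h, h \in Hs F & h c = d) -> (exists2 h, h \in Hs F & h d = e) ->
  exists2 h, h \in Hs F & h c = e.
Proof.
case=> h1 H1 E1 [h2 H2 E2]; exists (h1 * h2)%g; first exact: groupM (H1 : h1 \in Hg F) H2.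
by rewrite permM E1.
Qed.

End Grp.

Section Main.
Variables (m n : nat) (g1 g2 : pattern m n) (C : eqType) (col : node m n -> C).
Local Notation nd := (node m n).
Local Notation F := [:: g1; g2].

Definition tau (x : nd) : bool * bool := (in_pattern g1 x, in_pattern g2 x).
Definition swp (t : bool * bool) := (t.2, t.1).
Definition rho (s : bool) t := if s then swp t else t.

Lemma rhoK s : involutive (rho s).
Proof. rewrite /involutive /cancel /rho /swp; by case: s => -[? ?]. Qed.

Lemma excE u v : exc F u v =
  ((u != v) && (tau u).1 && (tau v).1) + ((u != v) && (tau u).2 && (tau v).2).
Proof. by rewrite /exc /= addn0 !andbA. Qed.

Definition cnt (j : 'I_n) (k : C) (t : bool * bool) :=
  \sum_(i < m) ((col (i, j) == k) && (tau (i, j) == t) : nat).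

Lemma auto_build (s : bool) (pi : {perm 'I_n}) (c d : nd) :
  (forall j k t, cnt (pi j) k t = cnt j k (rho s t)) ->
  d.2 = pi c.2 -> col d = col c -> tau d = rho s (tau c) ->
  exists h, [/\ h \in Hs col F, h c = d &
     forall x, (h x).2 = pi x.2 /\ tau (h x) = rho s (tau x)].
Proof.
case: c => i0 j0; case: d => i1 j1 /= Hc Ej Ecol Etau.
pose a j (i : 'I_m) := (col (i, j), rho s (tau (i, j))).
pose b j (i : 'I_m) := (col (i, pi j), tau (i, pi j)).
have Hab : forall j v, \sum_(i < m) (a j i == v : nat) = \sum_(i < m) (b j i == v : nat).
  move=> j [k t]; rewrite /a /b.
  have -> : \sum_(i < m) ((col (i, j), rho s (tau (i, j))) == (k, t) : nat) = cnt j k (rho s t).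
    apply: eq_bigr => i _; rewrite xpair_eqE; congr (nat_of_bool (_ && _)).
    by apply/eqP/eqP => [<-|->]; rewrite rhoK.
  by rewrite -Hc; apply: eq_bigr => i _; rewrite xpair_eqE.
pose P j (be : {perm 'I_m}) := [forall i, b j (be i) == a j i] && ((j == j0) ==> (be i0 == i1)).
pose beta j := odflt 1%g [pick be | P j be].
have Hbeta : forall j, (forall i, b j (beta j i) = a j i) /\ (j = j0 -> beta j i0 = i1).
  move=> j; rewrite /beta; case: pickP => [be /andP[/forallP H1 /implyP H2]|H0].
    by split=> [i|Ej0]; apply/eqP; [apply: H1|apply: H2; rewrite Ej0].
  exfalso.
  have [be [Hbe1 Hbe2]] : exists be : {perm 'I_m}, (forall i, b j (be i) = a j i) /\ (j = j0 -> be i0 = i1).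
    case: (eqVneq j j0) => [->|ne].
      have Eab : a j0 i0 = b j0 i1 by rewrite /a /b -Ej Ecol Etau.
      case: (match_ord_pin (Hab j0) Eab) => be [H1 H2]; exists be; split => //.
    case: (match_ord (Hab j)) => be H1; exists be; split => // E; by rewrite E eqxx in ne.
  have := H0 be; rewrite /P; move/negbT; rewrite negb_and => /orP[/forallP[]|].
    by move=> i; apply/negP; rewrite Hbe1 eqxx.
  by rewrite negb_imply => /andP[/eqP/Hbe2 -> ]; rewrite eqxx.
pose f (x : nd) : nd := (beta x.2 x.1, pi x.2).
have f_inj : injective f.
  move=> [x1 x2] [y1 y2]; rewrite /f /= => -[E1 /perm_inj E2]; subst y2.
  by rewrite (perm_inj E1).
exists (perm f_inj).
have Hf : forall x, col (f x) = col x /\ tau (f x) = rho s (tau x).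
  move=> [x1 x2]; have [H1 _] := Hbeta x2; have := H1 x1.
  by rewrite /a /b /f /= => -[-> ->].
split.
- apply/HsP; split=> [u v|x]; last by rewrite permE; case: (Hf x).
  rewrite !permE; split.
    rewrite /inh (inj_eq f_inj) /f /= (inj_eq perm_inj) //.
  rewrite !excE (inj_eq f_inj); case: (Hf u) => _ ->; case: (Hf v) => _ ->.
  by destruct s => //=; rewrite addnC.
- rewrite permE /f /=; have [_ ->] := Hbeta j0; by [rewrite Ej | ].
- by move=> x; rewrite permE; split => //; case: (Hf x).
Qed.


Lemma sum_eqb (I : finType) (x : I) (Q : bool) : \sum_(e : I) ((e == x) && Q : nat) = Q.
Proof. by rewrite (bigD1 x) //= eqxx big1 ?addn0 // => e /negbTE ->. Qed.

Lemma sum_node (f : nd -> nat) : \sum_(e : nd) f e = \sum_(i < m) \sum_(j < n) f (i, j).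
Proof. by rewrite pair_big; apply: eq_bigr => -[i j]. Qed.

Definition cc (j : 'I_n) (k : C) := \sum_(i < m) (col (i, j) == k : nat).

Lemma cc_sum j k : \sum_(e : nd) ((col e == k) && (e.2 == j) : nat) = cc j k.
Proof.
rewrite sum_node /cc; apply: eq_bigr => i _.
rewrite (bigD1 j) //= eqxx andbT big1 ?addn0 // => j' /negbTE ->; by rewrite andbF.
Qed.

Lemma cc_bal F' c d : balanced F' col -> col c = col d -> forall k, cc c.2 k = cc d.2 k.
Proof.
move=> Hb Ecd k.
have key : forall x, \sum_(e | col e == k) inh e x + (col x == k) = cc x.2 k.
  move=> x; rewrite -cc_sum -(sum_eqb x (col x == k)) big_mkcond -big_split /=.
  apply: eq_bigr => e _; rewrite /inh.
  case: (eqVneq e x) => [->|ne] /=; first by rewrite eqxx andbF; case: (col x == k).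
  by rewrite andbT; case: (col e == k) => //=; rewrite addn0.
by rewrite -!key; case: (Hb c d Ecd k) => -> _; rewrite Ecd.
Qed.

Lemma sum_by_col (f : nd -> nat) : \sum_(e : nd) f e =
  \sum_(k <- undup [seq col e | e <- enum nd]) \sum_(e : nd | col e == k) f e.
Proof.
under [RHS]eq_bigr do rewrite big_mkcond.
rewrite exchange_big /=; apply: eq_bigr => e _.
rewrite (bigD1_seq (col e)) ?undup_uniq ?mem_undup ?map_f ?mem_enum //=; last by rewrite -enumT mem_enum.
rewrite ifT //.
rewrite big1_seq ?addn0 // => k /andP[ne _]; by rewrite eq_sym (negbTE ne).
Qed.

Lemma sum_in (g : pattern m n) : \sum_(e : nd) (in_pattern g e : nat) = n.
Proof.
rewrite sum_node exchange_big /= -[RHS]card_ord -sum1_card; apply: eq_bigr => j _.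
rewrite (bigD1 (g j)) //= /in_pattern /= eqxx big1 // => i ne; by rewrite eq_sym (negbTE ne).
Qed.

Lemma sum_in_ne (g : pattern m n) x :
  \sum_(e : nd) ((e != x) && in_pattern g e && in_pattern g x : nat) = in_pattern g x * n.-1.
Proof.
case Hx: (in_pattern g x); last by rewrite big1 // => e _; rewrite andbF.
have Hs := sum_in g; rewrite (bigD1 x) //= Hx in Hs.
rewrite mul1n; under eq_bigr do rewrite andbT.
rewrite big_mkcond /= in Hs.
have E : \sum_(i : nd) (if i != x then (in_pattern g i : nat) else 0) =
  \sum_(i : nd) ((i != x) && in_pattern g i : nat) by apply: eq_bigr => i _; case: (i != x).
rewrite E in Hs; lia.
Qed.

Definition T (x : nd) := ((tau x).1 : nat) + (tau x).2.

Lemma tot_exc x : \sum_(e : nd) exc F e x = T x * n.-1.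
Proof.
under eq_bigr do rewrite excE.
by rewrite big_split /= !sum_in_ne mulnDl.
Qed.

Lemma T_bal c d : balanced F col -> 1 < n -> col c = col d -> T c = T d.
Proof.
move=> Hb Hn Ecd; apply/eqP; rewrite -(@eqn_pmul2r n.-1); last by case: n Hn => [|[]].
rewrite -!tot_exc !(sum_by_col (fun e => exc F e _)); apply/eqP.
by apply: eq_bigr => k _; case: (Hb c d Ecd k).
Qed.


Definition A (j : 'I_n) := g1 j == g2 j.
Definition p1 (j : 'I_n) : nd := (g1 j, j).
Definition p2 (j : 'I_n) : nd := (g2 j, j).
Definition ccF (j : 'I_n) := [ffun e : nd => cc j (col e)].
Definition key (j : 'I_n) := (A j, col (p1 j), col (p2 j), ccF j).
Definition swapkey (K : bool * C * C * {ffun nd -> nat}) := (K.1.1.1, K.1.2, K.1.1.2, K.2).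
Definition mixing := exists x y, [/\ tau x = (true, false), tau y = (false, true) & col x = col y].

Lemma tau_p1 j : tau (p1 j) = (true, A j).
Proof. by rewrite /tau /in_pattern /p1 /A /= eqxx eq_sym. Qed.
Lemma tau_p2 j : tau (p2 j) = (A j, true).
Proof. by rewrite /tau /in_pattern /p2 /A /= eqxx. Qed.

Lemma tau_tt x : tau x = (true, true) -> x = p1 x.2 /\ A x.2.
Proof.
case: x => i j; rewrite /tau /in_pattern /p1 /A /= => -[/eqP E1 /eqP E2].
by rewrite E1 E2 eqxx.
Qed.
Lemma tau_tf x : tau x = (true, false) -> x = p1 x.2 /\ ~~ A x.2.
Proof.
case: x => i j; rewrite /tau /in_pattern /p1 /A /= => -[/eqP E1 E2].
by rewrite E1 eq_sym E2.
Qed.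
Lemma tau_ft x : tau x = (false, true) -> x = p2 x.2 /\ ~~ A x.2.
Proof.
case: x => i j; rewrite /tau /in_pattern /p2 /A /= => -[E1 /eqP E2].
by rewrite E2 E1.
Qed.

Lemma A_p j : A j -> p2 j = p1 j.
Proof. by rewrite /A /p1 /p2 => /eqP ->. Qed.

Lemma sum_pos_ex (P : pred 'I_m) : 0 < \sum_(i < m) (P i : nat) -> exists i, P i.
Proof.
move=> H; case: (pickP P) => [i Pi|H0]; first by exists i.
by rewrite big1 in H => // i _; rewrite H0.
Qed.

Lemma transfer j j' : (forall k, cc j k = cc j' k) ->
  forall i, exists i', col (i', j') = col (i, j).
Proof.
move=> H i.
have : 0 < cc j' (col (i, j)).
  by rewrite -H /cc (bigD1 i) //= eqxx.
by case/sum_pos_ex => i' /eqP E; exists i'.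
Qed.

Section Case.
Hypothesis HT : forall x y, col x = col y -> T x = T y.

Lemma AA j j' : (forall k, cc j k = cc j' k) -> A j -> A j' /\ col (p1 j') = col (p1 j).
Proof.
move=> H Aj; case: (transfer H (g1 j)) => i' E.
have := HT E; rewrite /T -/(p1 j) tau_p1 Aj.
case Et: (tau (i', j')) => [[] []] //= _.
by case: (tau_tt Et) => /= <- ->.
Qed.

Lemma DD j' (x : nd) : (forall k, cc x.2 k = cc j' k) -> T x = 1 ->
  col x = col (p1 j') \/ col x = col (p2 j').
Proof.
case: x => i j /= H Tx; case: (transfer H i) => i' E.
have := HT E; rewrite Tx /T.
case Et: (tau (i', j')) => [[] []] //= _.
  by case: (tau_tf Et) => /= <- _; left.
by case: (tau_ft Et) => /= <- _; right.
Qed.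

Lemma case_main c d : col c = col d -> (forall k, cc c.2 k = cc d.2 k) ->
  (key d.2 = key c.2 /\ tau d = tau c) \/
  [/\ key d.2 = swapkey (key c.2), tau d = swp (tau c) & mixing].
Proof.
move=> Ecd H01.
have H10 : forall k, cc d.2 k = cc c.2 k by move=> k; rewrite H01.
have Ecc : ccF d.2 = ccF c.2 by apply/ffunP => e; rewrite !ffunE H01.
have HA : A d.2 = A c.2.
  by apply/idP/idP => HA; [case: (AA H10 HA) | case: (AA H01 HA)].
have Tcd := HT Ecd.
set j0 := c.2 in H01 H10 Ecc HA *; set j1 := d.2 in H01 H10 Ecc HA *.
have Hpair : (col (p1 j1) = col (p1 j0) /\ col (p2 j1) = col (p2 j0)) \/
             (col (p1 j1) = col (p2 j0) /\ col (p2 j1) = col (p1 j0)).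
  case Aj0: (A j0).
    left; case: (AA H01 Aj0) => Aj1 E.
    by rewrite (A_p Aj0) (A_p Aj1).
  have nA0 : ~~ A j0 by rewrite Aj0.
  have nA1 : ~~ A j1 by rewrite HA Aj0.
  have T1 : forall j, ~~ A j -> T (p1 j) = 1 /\ T (p2 j) = 1.
    by move=> j /negbTE nA; rewrite /T tau_p1 tau_p2 nA.
  have M1 := DD (x := p1 j0) H01 (proj1 (T1 _ nA0)).
  have M2 := DD (x := p2 j0) H01 (proj2 (T1 _ nA0)).
  have M3 := DD (x := p1 j1) H10 (proj1 (T1 _ nA1)).
  have M4 := DD (x := p2 j1) H10 (proj2 (T1 _ nA1)).
  case: M1 => M1; case: M2 => M2; case: M3 => M3; case: M4 => M4;
    first [left; split; congruence | right; split; congruence].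
have Keq : col (p1 j1) = col (p1 j0) -> col (p2 j1) = col (p2 j0) -> key j1 = key j0.
  by move=> E1 E2; rewrite /key HA E1 E2 Ecc.
have Ksw : col (p1 j1) = col (p2 j0) -> col (p2 j1) = col (p1 j0) -> key j1 = swapkey (key j0).
  by move=> E1 E2; rewrite /key /swapkey /= HA E1 E2 Ecc.
have [Etau|Ntau] := eqVneq (tau d) (tau c).
  case: Hpair => [[E1 E2]|[E1 E2]]; first by left; split => //; apply: Keq.
  case: (eqVneq (col (p1 j0)) (col (p2 j0))) => [E12|N12].
    by left; split => //; apply: Keq; congruence.
  have nA0 : ~~ A j0 by apply/negP => /A_p E; rewrite E eqxx in N12.
  have nA1 : ~~ A j1 by rewrite HA.
  move: Tcd Ecd Etau; rewrite /T.
  case Ec: (tau c) => [[] []]; case Ed: (tau d) => [[] []] //= _ Ecd _.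
  - by case: (tau_tt Ec) => _ A0; rewrite A0 in nA0.
  - case: (tau_tf Ec) => Hc _; case: (tau_tf Ed) => Hd _.
    by rewrite Hc Hd -/j0 -/j1 E1 in Ecd; rewrite Ecd eqxx in N12.
  - case: (tau_ft Ec) => Hc _; case: (tau_ft Ed) => Hd _.
    by rewrite Hc Hd -/j0 -/j1 E2 in Ecd; rewrite Ecd eqxx in N12.
  - right; split; [exact: Ksw | by [] | ].
    exists (p1 j0), (p2 j1); split; rewrite ?tau_p1 ?tau_p2 ?(negbTE nA0) ?(negbTE nA1) //.
move: Tcd Ecd Ntau; rewrite /T.
case Ec: (tau c) => [[] []]; case Ed: (tau d) => [[] []] //= _ Ecd _.
- case: (tau_tf Ec) => Hc _; case: (tau_ft Ed) => Hd _.
  right; split => //; last by exists c, d; split.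
  rewrite Hc Hd -/j0 -/j1 in Ecd.
  by apply: Ksw; case: Hpair => -[E1 E2]; congruence.
- case: (tau_ft Ec) => Hc _; case: (tau_tf Ed) => Hd _.
  right; split => //; last by exists d, c; split.
  rewrite Hc Hd -/j0 -/j1 in Ecd.
  by apply: Ksw; case: Hpair => -[E1 E2]; congruence.
Qed.

End Case.


Lemma cnt_1 j k b : cnt j k (true, b) = (col (p1 j) == k) && (A j == b).
Proof.
rewrite /cnt (bigD1 (g1 j)) //= big1 ?addn0.
  by rewrite -/(p1 j) tau_p1 xpair_eqE eqxx.
move=> i ne; have ne' : (g1 j == i) = false by rewrite eq_sym (negbTE ne).
by rewrite /tau /in_pattern /= ne' xpair_eqE /= andbF.
Qed.

Lemma cnt_01 j k : cnt j k (false, true) = (col (p2 j) == k) && ~~ A j.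
Proof.
rewrite /cnt (bigD1 (g2 j)) //= big1 ?addn0.
  by rewrite -/(p2 j) tau_p2 xpair_eqE eqxx andbT; case: (A j).
move=> i ne; have ne' : (g2 j == i) = false by rewrite eq_sym (negbTE ne).
by rewrite /tau /in_pattern /= ne' xpair_eqE /= !andbF.
Qed.

Lemma cc_split j k : cc j k = cnt j k (false, false) + cnt j k (false, true) +
  cnt j k (true, false) + cnt j k (true, true).
Proof.
rewrite /cc /cnt -!big_split /=; apply: eq_bigr => i _.
by case: (tau (i, j)) => [[] []]; case: (col (i, j) == k).
Qed.

Lemma cc_of_ccF j j' : ccF j' = ccF j -> forall k, cc j' k = cc j k.
Proof.
move=> Hf k; case: (pickP (fun e : nd => col e == k)) => [e /eqP <-|H0].
  by have := congr1 (fun f : {ffun nd -> nat} => f e) Hf; rewrite !ffunE.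
by rewrite /cc !big1 // => i _; rewrite H0.
Qed.

Lemma cnt_key s j j' : key j' = (if s then swapkey (key j) else key j) ->
  forall k t, cnt j' k t = cnt j k (rho s t).
Proof.
move=> Hk k.
have [HA [H1 [H2 Hf]]] : A j' = A j /\ col (p1 j') = (if s then col (p2 j) else col (p1 j)) /\
   col (p2 j') = (if s then col (p1 j) else col (p2 j)) /\ ccF j' = ccF j.
  by case: s Hk; rewrite /key /swapkey /= => -[-> -> -> ->].
have Hcc := cc_of_ccF Hf k.
have Ett : cnt j' k (true, true) = cnt j k (true, true).
  rewrite !cnt_1 HA H1; case: s {H1 H2 Hk} => //.
  by case Aj: (A j); rewrite ?andbF // (A_p Aj).
have Etf : cnt j' k (true, false) = cnt j k (rho s (true, false)).
  rewrite cnt_1 HA H1; clear H1 H2 Hk Ett; case: s => /=; rewrite ?cnt_01 ?cnt_1 //.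
  by case: (A j); rewrite ?andbF ?andbT.
have Eft : cnt j' k (false, true) = cnt j k (rho s (false, true)).
  rewrite cnt_01 HA H2; clear H1 H2 Hk Ett Etf; case: s => /=; rewrite ?cnt_01 ?cnt_1 //.
  by case: (A j); rewrite ?andbF ?andbT.
have S1 := cc_split j k; have S2 := cc_split j' k.
case=> [[] []]; rewrite ?Ett ?Etf ?Eft //; case: (s) Etf Eft => /= Etf Eft; rewrite /swp /= in Etf Eft *; lia.
Qed.


Lemma col_in (g : pattern m n) k : \sum_(e : nd | col e == k) (in_pattern g e : nat) =
  \sum_(j < n) (col (g j, j) == k : nat).
Proof.
rewrite big_mkcond sum_node exchange_big /=; apply: eq_bigr => j _.
rewrite (bigD1 (g j)) //= /in_pattern /= eqxx big1 ?addn0.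
  by case: (col _ == k).
move=> i ne; have ne' : (g j == i) = false by rewrite eq_sym (negbTE ne).
by rewrite ne'; case: (col _ == k).
Qed.

Lemma in_drop (g : pattern m n) x k : in_pattern g x ->
  \sum_(e : nd | col e == k) ((e != x) && in_pattern g e : nat) + (col x == k) =
  \sum_(e : nd | col e == k) (in_pattern g e : nat).
Proof.
move=> Hx; rewrite -(sum_eqb x (col x == k)) !big_mkcond -big_split /=.
rewrite [RHS]big_mkcond; apply: eq_bigr => e _; case: (eqVneq e x) => [->|ne] /=.
  by rewrite Hx; case: (col x == k).
by rewrite addn0.
Qed.

Lemma mix_count : balanced F col -> mixing ->
  forall k, \sum_(j < n) (col (p1 j) == k : nat) = \sum_(j < n) (col (p2 j) == k : nat).
Proof.
move=> Hb [x [y [Tx Ty Exy]]] k.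
rewrite /p1 /p2 -!col_in.
have [_ E] := Hb x y Exy k.
have Ex : \sum_(e | col e == k) exc F e x = \sum_(e : nd | col e == k) ((e != x) && in_pattern g1 e : nat).
  by apply: eq_bigr => e _; rewrite excE Tx /= andbT andbF addn0.
have Ey : \sum_(e | col e == k) exc F e y = \sum_(e : nd | col e == k) ((e != y) && in_pattern g2 e : nat).
  by apply: eq_bigr => e _; rewrite excE Ty /= andbT andbF.
have Hx : in_pattern g1 x by move: Tx; rewrite /tau => -[->].
have Hy : in_pattern g2 y by move: Ty; rewrite /tau => -[_ ->].
by rewrite -(in_drop _ Hx) -(in_drop _ Hy) -Ex -Ey E Exy.
Qed.

Lemma swapkeyK : involutive swapkey.
Proof. by case=> [[[? ?] ?] ?]. Qed.

Section Glob.
Hypothesis HT : forall x y, col x = col y -> T x = T y.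
Hypothesis Hcc : forall c d, col c = col d -> forall k, cc c.2 k = cc d.2 k.
Hypothesis Hmc : forall k, \sum_(j < n) (col (p1 j) == k : nat) = \sum_(j < n) (col (p2 j) == k : nat).

Lemma half j0 : \sum_(j < n) (key j == swapkey (key j0) : nat) = \sum_(j < n) (key j == key j0 : nat).
Proof.
case: (eqVneq (col (p1 j0)) (col (p2 j0))) => [E|N].
  by have -> : swapkey (key j0) = key j0 by rewrite /swapkey /key /= E.
have nA0 : ~~ A j0 by apply/negP => /A_p E; rewrite E eqxx in N.
set a0 := col (p1 j0).
have P1 : forall j, (key j == key j0) = (~~ A j && (col (p1 j) == a0)).
  move=> j; apply/eqP/andP => [E|[nA E]].
    have := congr1 (fun K => K.1.1.1) E; have := congr1 (fun K => K.1.1.2) E.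
    by rewrite /key /= => -> ->; rewrite nA0.
  have Ec : col (p1 j0) = col (p1 j) by apply/esym/eqP.
  case: (case_main HT Ec (Hcc Ec)) => [[] //|[_ ]].
  by rewrite !tau_p1 (negbTE nA) (negbTE nA0).
have P2 : forall j, (key j == swapkey (key j0)) = (~~ A j && (col (p2 j) == a0)).
  move=> j; apply/eqP/andP => [E|[nA E]].
    have := congr1 (fun K => K.1.1.1) E; have := congr1 (fun K => K.1.2) E.
    by rewrite /key /= => -> ->; rewrite nA0.
  have Ec : col (p1 j0) = col (p2 j) by apply/esym/eqP.
  case: (case_main HT Ec (Hcc Ec)) => [[_ ]|[] //].
  by rewrite tau_p1 tau_p2 (negbTE nA) (negbTE nA0).
under eq_bigr do rewrite P2; under [RHS]eq_bigr do rewrite P1.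
have Sp : forall (q : 'I_n -> nd), \sum_(j < n) (col (q j) == a0 : nat) =
   \sum_(j < n) (A j && (col (q j) == a0) : nat) + \sum_(j < n) (~~ A j && (col (q j) == a0) : nat).
  by move=> q; rewrite -big_split /=; apply: eq_bigr => j _; case: (A j); rewrite /= ?addn0.
have EA : \sum_(j < n) (A j && (col (p1 j) == a0) : nat) = \sum_(j < n) (A j && (col (p2 j) == a0) : nat).
  by apply: eq_bigr => j _; case Aj: (A j) => //=; rewrite (A_p Aj).
have := Hmc a0; rewrite (Sp p1) (Sp p2) EA; move/addnI => H; symmetry; exact: H.
Qed.

Lemma global : exists pi : {perm 'I_n}, forall j, key (pi j) = swapkey (key j).
Proof.
have [pi Hpi] : exists pi : {perm 'I_n}, forall j, key (pi j) = swapkey (key j);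
  last by exists pi.
apply: (match_ord (a := fun j => swapkey (key j)) (b := key)) => K.
have E : forall j, (swapkey (key j) == K) = (key j == swapkey K).
  by move=> j; apply/eqP/eqP => [<-|->]; rewrite swapkeyK.
under eq_bigr do rewrite E.
case: (pickP (fun j => key j == K)) => [j0 /eqP <-|H0].
  by rewrite half.
case: (pickP (fun j => key j == swapkey K)) => [j0 /eqP E0|H1].
  by have := half j0; rewrite E0 swapkeyK => ->.
by rewrite !big1 // => j _; rewrite ?H0 ?H1.
Qed.

End Glob.


Lemma exc0 (F' : seq (pattern m n)) u v : n <= 1 -> exc F' u v = 0.
Proof.
move=> Hn; rewrite /exc (eq_count (a2 := pred0)) ?count_pred0 // => g /=.
apply/negP => /and3P[ne /eqP Hu /eqP Hv]; move: ne; case: u v Hu Hv => [u1 u2] [v1 v2] /= Hu Hv.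
have E2 : u2 = v2 by apply/ord_inj; move: (ltn_ord u2) (ltn_ord v2); lia.
by subst; rewrite eqxx.
Qed.

Lemma small_aut (F' : seq (pattern m n)) (p : {perm nd}) : n <= 1 -> p \in autW F'.
Proof.
move=> Hn; apply/autWP => u v; rewrite !exc0 //; split => //.
have E : forall x y : nd, x.2 == y.2.
  by move=> x y; apply/eqP/ord_inj; move: (ltn_ord x.2) (ltn_ord y.2); lia.
by rewrite /inh !E (inj_eq perm_inj).
Qed.

Lemma main2 : balanced F col -> orbit_coloring F col.
Proof.
move=> Hb; apply: orbit_of_H => c d Ecd.
case: (leqP n 1) => Hn.
  exists (tperm c d); last by rewrite tpermL.
  apply/HsP; split; first by apply/autWP; exact: small_aut.
  by move=> x; case: tpermP => [->|->|]; rewrite ?Ecd.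
have HT : forall x y, col x = col y -> T x = T y by move=> x y; apply: T_bal.
have Hcc : forall x y, col x = col y -> forall k, cc x.2 k = cc y.2 k by move=> x y; apply: cc_bal Hb.
have caseA : forall c d, key d.2 = key c.2 -> col d = col c -> tau d = tau c ->
    exists2 h, h \in Hs col F & h c = d.
  move=> c0 d0 Ek Ec Et.
  have Hpi : forall j k t, cnt (tperm c0.2 d0.2 j) k t = cnt j k (rho false t).
    move=> j; apply: (cnt_key (s := false)) => /=.
    by case: tpermP => [->|->|] //; rewrite Ek.
  have [h [Hh E _]] := auto_build Hpi (esym (tpermL _ _)) Ec Et.
  by exists h.
case: (case_main HT Ecd (Hcc _ _ Ecd)) => [[Ek Et]|[Ek Et Hmix]].
  by apply: caseA.
have [pi Hpi] := global HT Hcc (mix_count Hb Hmix).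
have Hcnt : forall j k t, cnt (pi j) k t = cnt j k (rho true t).
  by move=> j; apply: (cnt_key (s := true)); rewrite Hpi.
have : 0 < cnt (pi c.2) (col c) (swp (tau c)).
  have swpK : forall t : bool * bool, swp (swp t) = t by case.
  rewrite Hcnt /rho swpK.
  by rewrite /cnt (bigD1 c.1) //= -surjective_pairing !eqxx.
case/sum_pos_ex => i /andP[/eqP Ci /eqP Ti].
have [h1 [Hh1 E1 _]] := auto_build (c := c) (d := (i, pi c.2)) Hcnt erefl Ci Ti.
apply: H_trans (ex_intro2 _ _ h1 Hh1 E1) _.
apply: caseA => //=; first by rewrite Hpi Ek.
  by rewrite Ci.
by rewrite Ti Et.
Qed.

End Main.

Unset Implicit Arguments.
Theorem theorem6p5 (m n : nat) (F : seq (pattern m n)) :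
  uniq F -> (size F = 1 \/ size F = 2) ->
  forall (C : eqType) (col : node m n -> C),
    balanced F col -> orbit_coloring F col.
Proof.
move=> _ HF C col Hb.
case: F HF Hb => [|g1 [|g2 [|? ?]]] /= HF Hb; try by case: HF.
  have E2 : forall e c, exc [:: g1; g1] e c = 2 * exc [:: g1] e c.
    by move=> e c; rewrite /exc /= !addn0 mul2n addnn.
  have Hb2 : balanced [:: g1; g1] col.
    move=> c d Ecd k; case: (Hb c d Ecd k) => E1 E3; split => //.
    under eq_bigr do rewrite E2; under [RHS]eq_bigr do rewrite E2; by rewrite -!big_distrr E3.
  case: (main2 Hb2) => H [/subsetP Hsub Horb]; exists H; split => //.
  apply/subsetP => p /Hsub /autWP Hp; apply/autWP => c d.
  case: (Hp c d) => -> E; split => //; move: E; rewrite !E2; lia.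
exact: main2.
Qed.
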